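(* In the allocation problem and Synchronized Greedy (SG) mechanism described in the context, suppose all $r_i$ are equal. Let $a^\pi$ be the SG allocation under truthful bids. Then for all agents $i,i'$ and all $k=1,\ldots,m$, \[\sum_{\ell=1}^k a^\pi_{i\pi_i(\ell)}\ \ge\ \sum_{\ell=1}^k a^\pi_{i'\pi_i(\ell)},\] i.e., every agent weakly majorization-prefers its own share to that of any other agent.
   Context: There are $m$ distinct divisible goods; good $j$ is available in amount $q_j>0$. There are $n$ agents; agent $i$ is to receive a total of $r_i>0$, with $\sum_j q_j=\sum_i r_i$. An allocation is a family $a_{ij}\ge 0$ with $\sum_j a_{ij}=r_i$ and $\sum_i a_{ij}=q_j$. Each agent $i$ has a true preference list $\pi_i$, a permutation of the goods ($\pi_i(1)$ most preferred); $\pi=(\pi_1,\ldots,\pi_n)$. The SG mechanism: each agent $i$ bids a permutation $\sigma_i$ of the goods; over time $t\in[0,1]$ each agent $i$ receives, at rate $r_i$, the good highest in $\sigma_i$ among those not yet exhausted (a good is exhausted when the total amount handed out equals $q_j$; several agents may receive a good simultaneously; upon exhaustion, agents receiving it switch instantly to their next non-exhausted good). $a^\pi_{ij}$ is the total amount of good $j$ agent $i$ receives when every agent $i$ bids $\pi_i$. *)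

(* Defs.v *)
From HB Require Import structures.
From mathcomp Require Import all_boot all_order all_algebra all_fingroup.
Set Implicit Arguments. Unset Strict Implicit. Unset Printing Implicit Defensive.
Import Order.TTheory GRing.Theory Num.Theory.
Local Open Scope ring_scope.

Section SG.
Variables (R : realFieldType) (n m : nat).
Variables (q : 'I_m -> R) (r : 'I_n -> R).
(* sigma i : 'S_m is agent i's bid; sigma i l is its (l+1)-th most preferred good. *)
Variable sigma : 'I_n -> 'S_m.

(* The good agent i currently receives when X is the set of exhausted goods:
   the highest good in sigma i that is not exhausted (None if all are). *)
Definition top (i : 'I_n) (X : {set 'I_m}) : option 'I_m :=
  ohead [seq sigma i l | l <- enum 'I_m & sigma i l \notin X].

Definition rate (X : {set 'I_m}) (j : 'I_m) : R :=
  \sum_(i | top i X == Some j) r i.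

Record state := State {
  exh : {set 'I_m};
  rem : {ffun 'I_m -> R};
  alloc : {ffun 'I_n * 'I_m -> R};
  time : R }.

(* One phase: run until the next exhaustion event (or until time 1). *)
Definition step (st : state) : state :=
  let X := exh st in
  let live j := (j \notin X) && (0 < rate X j) in
  let d := \big[Num.min/(1 - time st)]_(j | live j) (rem st j / rate X j) in
  {| exh := X :|: [set j | live j && (rem st j / rate X j == d)];
     rem := [ffun j => rem st j - rate X j * d];
     alloc := [ffun p => alloc st p +
                 (if top p.1 X == Some p.2 then r p.1 * d else 0)];
     time := time st + d |}.

Definition init : state :=
  {| exh := set0; rem := [ffun j => q j]; alloc := [ffun _ => 0]; time := 0 |}.

(* Each phase either exhausts a good or reaches time 1, so m+1 phases
   complete the process on [0,1]. *)
Definition sg_alloc (i : 'I_n) (j : 'I_m) : R :=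
  alloc (iter m.+1 step init) (i, j).

End SG.

(* Main.v *)
Require Import Defs.
From HB Require Import structures.
From mathcomp Require Import all_boot all_order all_algebra all_fingroup.
From mathcomp Require Import lra.
Import Order.TTheory GRing.Theory Num.Theory.
Local Open Scope ring_scope.

Lemma top_notin n m (sigma : 'I_n -> 'S_m) p (X : {set 'I_m}) g :
  top sigma p X = Some g -> g \notin X.
Proof.
rewrite /top; case E: [seq sigma p l | l <- enum 'I_m & sigma p l \notin X] => [|x s] //= [<-].
have : x \in [seq sigma p l | l <- enum 'I_m & sigma p l \notin X] by rewrite E mem_head.
by case/mapP => l; rewrite mem_filter => /andP[? _] ->.
Qed.

Lemma top_prefix n m (sigma : 'I_n -> 'S_m) i (X : {set 'I_m}) (l : 'I_m) :
  sigma i l \notin X -> exists2 l' : 'I_m, (l' <= l)%N & top sigma i X = Some (sigma i l').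
Proof.
move=> Hl; rewrite /top.
have srt : sorted (relpre val ltn) [seq l <- enum 'I_m | sigma i l \notin X].
  apply: sorted_filter; first by move=> a b c; apply: ltn_trans.
  by rewrite -sorted_map val_enum_ord iota_ltn_sorted.
have : l \in [seq l <- enum 'I_m | sigma i l \notin X] by rewrite mem_filter Hl mem_enum.
case E: [seq l <- enum 'I_m | sigma i l \notin X] srt => [|x s] //= srt. move=> H.
exists x => //; move: H.
rewrite inE => /orP[/eqP -> //|ls].
have := order_path_min (fun a b c => @ltn_trans (val a) (val b) (val c)) srt.
by move/allP/(_ _ ls) => /= /ltnW.
Qed.

Arguments top_notin {n m sigma p X g}.
Arguments top_prefix {n m sigma i X l}.

Section Main.
Variables (R : realFieldType) (n m : nat) (r : 'I_n -> R) (sigma : 'I_n -> 'S_m).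
Hypothesis hr : forall i, 0 < r i.

Definition delta (st : state R n m) : R :=
  \big[Num.min/(1 - time st)]_(j | (j \notin exh st) && (0 < rate r sigma (exh st) j))
     (Defs.rem st j / rate r sigma (exh st) j).

Lemma alloc_step st p : alloc (step r sigma st) p = alloc st p +
  (if top sigma p.1 (exh st) == Some p.2 then r p.1 * delta st else 0).
Proof. by rewrite /step /= ffunE. Qed.

Definition Inv (st : state R n m) :=
  time st <= 1 /\ forall j, j \notin exh st -> 0 <= Defs.rem st j.

Lemma rate_ge0 X j : 0 <= rate r sigma X j.
Proof. by apply: sumr_ge0 => i _; apply: ltW. Qed.

Lemma delta_ge0 (st : state R n m) : Inv st -> 0 <= delta st.
Proof.
case=> Ht Hr; rewrite /delta; apply: (big_ind (fun x => 0 <= x)).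
- by rewrite subr_ge0.
- by move=> x y hx hy; rewrite le_min hx hy.
- by move=> j /andP[hj hp]; apply: divr_ge0; [apply: Hr| apply: ltW].
Qed.

Lemma delta_le1 st : delta st <= 1 - time st.
Proof.
rewrite /delta; elim/big_rec: _ => // j y _ hy.
by rewrite ge_min hy orbT.
Qed.

Lemma delta_le st j : (j \notin exh st) && (0 < rate r sigma (exh st) j) ->
  delta st <= Defs.rem st j / rate r sigma (exh st) j.
Proof. by move=> hj; rewrite /delta (bigD1 j) //= ge_min lexx. Qed.


Lemma Inv_step st : Inv st -> Inv (step r sigma st).
Proof.
move=> I; have d0 := delta_ge0 st I; case: I => Ht Hr; split.
  rewrite /step /=; have := delta_le1 st; rewrite /delta; lra.
move=> j; rewrite /step /= ffunE in_setU negb_or => /andP[hj _].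
have := rate_ge0 (exh st) j; rewrite le0r => /orP[/eqP -> | rp].
  by rewrite mul0r subr0; apply: Hr.
have hl := delta_le st j; rewrite hj rp /= in hl.
have := hl isT; rewrite /delta => hd.
rewrite subr_ge0; rewrite -(ler_pM2l rp) in hd.
by apply: le_trans hd _; rewrite mulrCA divff ?mulr1 // gt_eqF.
Qed.

Variables (i : 'I_n) (k : nat).

Lemma sum_if p (X : {set 'I_m}) (c : R) : \sum_(l < m | (l < k)%N) (if top sigma p X == Some (sigma i l) then c else 0)
  = if [exists l : 'I_m, ((l < k)%N) && (top sigma p X == Some (sigma i l))] then c else 0.
Proof.
case: existsP => [[l0 /andP[hl0 e0]] | hn].
- rewrite (bigD1 l0) //= e0 big1 ?addr0 // => l /andP[hl nl].
  case: eqP => // e; move: e0; rewrite e => /eqP [] /perm_inj h.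
  by rewrite h eqxx in nl.
- rewrite big1 // => l hl; case: eqP => // e; exfalso; apply: hn.
  by exists l; rewrite hl e eqxx.
Qed.

Lemma ex_top i' (X : {set 'I_m}) : [exists l : 'I_m, ((l < k)%N) && (top sigma i' X == Some (sigma i l))] ->
  [exists l : 'I_m, ((l < k)%N) && (top sigma i X == Some (sigma i l))].
Proof.
case/existsP => l /andP[hl /eqP e].
have := top_notin e; case/top_prefix => l' hl' e'.
apply/existsP; exists l'; rewrite e' eqxx andbT.
exact: leq_ltn_trans hl' hl.
Qed.

Definition S p (st : state R n m) := \sum_(l < m | (l < k)%N) alloc st (p, sigma i l).

Lemma S_step p st : S p (step r sigma st) = S p st +
  \sum_(l < m | (l < k)%N) (if top sigma p (exh st) == Some (sigma i l) then r p * delta st else 0).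
Proof. by rewrite /S -big_split /=; apply: eq_bigr => l _; rewrite alloc_step. Qed.

Hypothesis hreq : forall i i' : 'I_n, r i = r i'.

Lemma S_step_le i' st : Inv st -> S i' st <= S i st ->
  S i' (step r sigma st) <= S i (step r sigma st).
Proof.
move=> I H; rewrite !S_step !sum_if.
have d0 := delta_ge0 st I.
have rd : 0 <= r i * delta st by apply: mulr_ge0 => //; apply: ltW.
case E: [exists l : 'I_m, ((l < k)%N) && (top sigma i' (exh st) == Some (sigma i l))].
- rewrite (ex_top _ _ E) (hreq i' i); exact: lerD.
- rewrite addr0; apply: le_trans H _; case: ifP => _; last by rewrite addr0.
  by rewrite lerDl.
Qed.
End Main.

Theorem theorem4 (R : realFieldType) (n m : nat)
  (q : 'I_m -> R) (r : 'I_n -> R) (pi : 'I_n -> 'S_m)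
  (hq : forall j, 0 < q j) (hr : forall i, 0 < r i)
  (hsum : \sum_(j < m) q j = \sum_(i < n) r i)
  (hreq : forall i i' : 'I_n, r i = r i') :
  forall (i i' : 'I_n) (k : nat), (0 < k <= m)%N ->
    \sum_(l < m | (l < k)%N) sg_alloc q r pi i' (pi i l)
      <= \sum_(l < m | (l < k)%N) sg_alloc q r pi i (pi i l).
Proof.
move=> i i' k _.
suff: forall t, @Inv R n m (iter t (step r pi) (init n q)) /\
  @S R n m pi i k i' (iter t (step r pi) (init n q)) <= @S R n m pi i k i (iter t (step r pi) (init n q)).
  by case/(_ m.+1).
elim=> [|t [I H]] /=.
- split; first by split => [|j _]; rewrite /= ?ler01 ?ffunE ?ltW.
  by rewrite /S /= !big1 // => l _; rewrite ffunE.
- split; first exact: Inv_step.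
  exact: S_step_le.
Qed.
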